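(* Every 5-crown is $(2P_3,C_4,C_6,C_7,\text{3-pentagon})$-free. Moreover, every 5-crown is anticonnected and contains no universal and no simplicial vertices.
   Context: Graphs are finite, simple, nonnull. A graph is $(H_1,\dots,H_m)$-free if it has no induced subgraph isomorphic to any $H_i$. $P_k$, $C_k$ are the path and cycle on $k$ vertices; $2P_3$ is two disjoint copies of $P_3$. The 3-pentagon is the graph on vertices $a,b_1,b_2,b_3,c_1,c_2,c_3$ where $a$ is adjacent to each $b_i$ and to no $c_i$, $\{b_1,b_2,b_3\}$ is stable, $\{c_1,c_2,c_3\}$ is a clique, and $b_ic_j$ is an edge iff $i=j$. A graph is anticonnected if its complement is connected. A vertex is simplicial if its neighbours form a (possibly empty) clique, universal if adjacent to all other vertices. A 5-ring is a graph $R$ whose vertex set partitions into nonempty sets $X_0,\dots,X_4$ (indices mod 5) such that each $X_i$ can be ordered $u^i_1,\dots,u^i_{|X_i|}$ with $X_i\subseteq N_R[u^i_{|X_i|}]\subseteq\dots\subseteq N_R[u^i_1]=X_{i-1}\cup X_i\cup X_{i+1}$ (closed neighbourhoods). A 5-crown is a 5-ring with such a partition $(X_0,\dots,X_4)$ for which there is $i^*\in\mathbb{Z}_5$ with $X_{i^*-1}$ complete to $X_{i^*-2}$ and $X_{i^*+1}$ complete to $X_{i^*+2}$ (a set $X$ is complete to $Y$ if every vertex of $X$ is adjacent to every vertex of $Y$). *)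

(* Defs.v *)
(* A simple graph is a symmetric irreflexive relation e on a finType T. *)
From mathcomp Require Import all_boot.
Set Implicit Arguments. Unset Strict Implicit. Unset Printing Implicit Defensive.

Section Graphs.
Variables (T : finType) (e : rel T).

Definition has_induced (k : nat) (h : rel 'I_k) : Prop :=
  exists f : 'I_k -> T, injective f /\ forall x y, e (f x) (f y) = h x y.

Definition induced_free (k : nat) (h : rel 'I_k) : Prop := ~ has_induced h.

Definition cnbhd (u : T) : {set T} := [set v | (v == u) || e u v].

Definition complement_rel : rel T := fun x y => (x != y) && ~~ e x y.

Definition anticonnected : Prop := forall x y : T, connect complement_rel x y.

Definition universal (v : T) : Prop := forall y, y != v -> e v y.

Definition simplicial (v : T) : Prop :=
  forall x y, x != y -> e v x -> e v y -> e x y.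

Definition complete_to (A B : {set T}) : Prop :=
  forall x y, x \in A -> y \in B -> e x y.

(* part v = index in Z_5 of the block containing v; X i = block of index i mod 5 *)
Definition block (part : T -> 'I_5) (i : nat) : {set T} :=
  [set v | nat_of_ord (part v) == i %% 5].

(* (X_0,...,X_4) given by part is a 5-ring partition; indices i-1 = i+4 mod 5 *)
Definition ring_partition (part : T -> 'I_5) : Prop :=
  forall i : nat, i < 5 ->
    exists (u : T) (s : seq T),
      [/\ uniq (u :: s),
          (forall x, (x \in u :: s) = (x \in block part i)),
          path (fun a b => cnbhd b \subset cnbhd a) u s,
          block part i \subset cnbhd (last u s) &
          cnbhd u = block part (i + 4) :|: block part i :|: block part (i + 1)].

Definition five_ring : Prop := exists part, ring_partition part.

Definition five_crown : Prop :=
  exists part, ring_partition part /\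
    exists istar : nat, istar < 5 /\
      complete_to (block part (istar + 4)) (block part (istar + 3)) /\
      complete_to (block part (istar + 1)) (block part (istar + 2)).

End Graphs.

Definition edges_rel (k : nat) (l : seq (nat * nat)) : rel 'I_k :=
  fun x y => ((nat_of_ord x, nat_of_ord y) \in l) || ((nat_of_ord y, nat_of_ord x) \in l).

Definition cycle_graph (n : nat) : rel 'I_n :=
  fun x y => (nat_of_ord y == (nat_of_ord x).+1 %% n) || (nat_of_ord x == (nat_of_ord y).+1 %% n).

Definition twoP3 : rel 'I_6 := edges_rel [:: (0,1); (1,2); (3,4); (4,5)].

(* 3-pentagon: a = 0, b_i = i (i=1,2,3), c_i = i+3 *)
Definition three_pentagon : rel 'I_7 :=
  edges_rel [:: (0,1); (0,2); (0,3); (4,5); (4,6); (5,6); (1,4); (2,5); (3,6)].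
Arguments cycle_graph n : clear implicits.

(* Main.v *)
Require Import Defs.
From mathcomp Require Import all_boot.
Set Implicit Arguments. Unset Strict Implicit. Unset Printing Implicit Defensive.

Definition near (a b : nat) := [|| b == (a+4)%%5, b == a | b == (a+1)%%5].

Section Ring.
Variables (T : finType) (e : rel T) (part : T -> 'I_5).
Hypothesis Hr : ring_partition e part.
Local Notation P v := (nat_of_ord (part v)).

Lemma ring_v v : exists u, [/\ P u = P v,
  cnbhd e u = block part (P v + 4) :|: block part (P v) :|: block part (P v + 1),
  cnbhd e v \subset cnbhd e u & block part (P v) \subset cnbhd e v].
Proof.
have [u [s [Hu Hmem Hpath Hlast Hcn]]] := Hr (ltn_ord (part v)).
pose r := fun a b => cnbhd e b \subset cnbhd e a.
have rtr : transitive r by move=> y x z H1 H2; exact: subset_trans H2 H1.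
have rrf : reflexive r by move=> x; exact: subxx.
have Hs : sorted r (u :: s) := Hpath.
have vin : v \in u :: s by rewrite Hmem inE modn_small.
have uin : u \in u :: s by rewrite inE eqxx.
exists u; split => //.
- by move: uin; rewrite Hmem inE modn_small // => /eqP.
- have Hidx : index v (u :: s) < size (u :: s) by rewrite index_mem.
  have := @sorted_leq_nth _ r rtr rrf v (u :: s) Hs 0 (index v (u :: s)).
  by rewrite nth_index // => H; apply: H.
- have Hidx : index v (u :: s) < size (u :: s) by rewrite index_mem.
  apply: subset_trans Hlast _.
  have := @sorted_leq_nth _ r rtr rrf v (u :: s) Hs (index v (u :: s)) (size s).
  rewrite nth_index // (nth_last v (u :: s)) /= => H; apply: H => //.
all: by rewrite inE.
Qed.

Lemma adj_near v w : e v w -> near (P v) (P w).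
Proof.
move=> Hvw; have [u [_ Hcn Hsub _]] := ring_v v.
have : w \in cnbhd e u by apply: (subsetP Hsub); rewrite inE Hvw orbT.
by rewrite Hcn !inE /near (modn_small (ltn_ord _)) => /orP[/orP[]|] ->; rewrite ?orbT.
Qed.

Lemma same_adj v w : P v = P w -> v != w -> e v w.
Proof.
move=> Hp Hne; have [_ [_ _ _ Hsub]] := ring_v v.
have : w \in cnbhd e v by apply: (subsetP Hsub); rewrite inE Hp modn_small.
by rewrite inE eq_sym (negPf Hne).
Qed.

Lemma compar v w : P v = P w -> (cnbhd e v \subset cnbhd e w) || (cnbhd e w \subset cnbhd e v).
Proof.
move=> Hp.
have [u [s [Hu Hmem Hpath Hlast Hcn]]] := Hr (ltn_ord (part v)).
pose r := fun a b => cnbhd e b \subset cnbhd e a.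
have rtr : transitive r by move=> y x z H1 H2; exact: subset_trans H2 H1.
have rrf : reflexive r by move=> x; exact: subxx.
have Hs : sorted r (u :: s) := Hpath.
have vin : v \in u :: s by rewrite Hmem inE modn_small.
have win : w \in u :: s by rewrite Hmem inE -Hp modn_small.
have H := @sorted_leq_nth _ r rtr rrf v (u :: s) Hs.
have Hv : index v (u :: s) < size (u :: s) by rewrite index_mem.
have Hw : index w (u :: s) < size (u :: s) by rewrite index_mem.
case: (leqP (index v (u :: s)) (index w (u :: s))) => Hij.
- have := H _ _ Hv Hw Hij; rewrite !nth_index // => Hx; apply/orP; right; exact: Hx.
- have := H _ _ Hw Hv (ltnW Hij); rewrite !nth_index // => Hx; apply/orP; left; exact: Hx.
Qed.

Lemma head_ex i : i < 5 -> exists u, P u = i /\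
  forall w, (P w == (i + 4) %% 5) || (P w == (i + 1) %% 5) -> e u w.
Proof.
move=> Hi.
have [u [s [Hu Hmem Hpath Hlast Hcn]]] := Hr Hi.
have uin : u \in u :: s by rewrite inE eqxx.
have Pu : P u = i by move: uin; rewrite Hmem inE modn_small // => /eqP.
exists u; split => // w Hw.
have : w \in cnbhd e u by rewrite Hcn !inE; case/orP: Hw => ->; rewrite ?orbT.
rewrite inE => /orP[/eqP Hwu|//]; subst w.
move: Hw; rewrite Pu.
by case: i Hi {Pu Hmem Hcn Hlast Hpath Hu} => [|[|[|[|[|]]]]].
Qed.
End Ring.
Fixpoint sall (T : Type) (a : T -> bool) (s : seq T) :=
  if s is x :: s' then (if a x then sall a s' else false) else true.
Fixpoint shas (T : Type) (a : T -> bool) (s : seq T) :=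
  if s is x :: s' then (if a x then true else shas a s') else false.
Definition imp (a b : bool) := if a then b else true.

Section Local.
Variable k : nat.
Variable hn : nat -> nat -> bool.
Variable l : seq nat.
Definition okpair0 x y :=
  let a := nth 0 l x in let b := nth 0 l y in let h := hn x y in
  if imp (a == b) h then
  if imp (~~ near a b) (~~ h) then
    imp (a == b) (~~ (if shas (fun z => [&& z != x, z != y, hn z x & ~~ hn z y]) (iota 0 k)
                  then shas (fun z => [&& z != x, z != y, hn z y & ~~ hn z x]) (iota 0 k) else false))
  else false else false.
Variable i : nat.
Definition okpairc x y :=
  let a := nth 0 l x in let b := nth 0 l y in let h := hn x y in
  if imp (if a == (i+4)%%5 then b == (i+3)%%5 else false) h then
    imp (if a == (i+1)%%5 then b == (i+2)%%5 else false) h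
  else false.
End Local.
Definition okb0 k hn l := sall (fun x => sall (fun y => if x == y then true else okpair0 k hn l x y) (iota 0 k)) (iota 0 k).
Definition okbc k hn l i := sall (fun x => sall (fun y => if x == y then true else okpairc hn l i x y) (iota 0 k)) (iota 0 k).

Fixpoint allseqs k : seq (seq nat) := if k is k'.+1 then [seq a :: t | a <- iota 0 5, t <- allseqs k'] else [:: [::]].

Definition cpair (hn : nat -> nat -> bool) (j m a b : nat) := imp (a == b) (hn j m) && imp (~~ near a b) (~~ hn j m).
Definition pairok (hn : nat -> nat -> bool) (t : seq nat) (a : nat) := sall (fun j => cpair hn j (size t) (nth 0 t j) a) (iota 0 (size t)).
Fixpoint gen hn k : seq (seq nat) := if k is k'.+1 then [seq rcons t a | t <- gen hn k', a <- [seq a <- iota 0 5 | pairok hn t a]] else [:: [::]].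
Definition nocheck k hn := sall (fun l => if okb0 k hn l then sall (fun i => ~~ okbc k hn l i) (iota 0 5) else true) (gen hn k).

Definition hC n a b := (b == a.+1 %% n) || (a == b.+1 %% n).
Definition hE (s : seq (nat*nat)) a b := ((a,b) \in s) || ((b,a) \in s).

Lemma sallE (T : Type) (a : T -> bool) s : sall a s = all a s.
Proof. by elim: s => //= x s ->; case: (a x). Qed.
Lemma shasE (T : Type) (a : T -> bool) s : shas a s = has a s.
Proof. by elim: s => //= x s ->; case: (a x). Qed.
Lemma impE a b : imp a b = a ==> b.
Proof. by case: a. Qed.

Lemma gen_complete hn l : all (fun a => a < 5) l ->
  (forall x y, x < y -> y < size l -> cpair hn x y (nth 0 l x) (nth 0 l y)) ->
  l \in gen hn (size l).
Proof.
elim/last_ind: l => [|t a IH] // Hall Hc.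
rewrite size_rcons.
change (rcons t a \in [seq rcons t a | t <- gen hn (size t), a <- [seq a <- iota 0 5 | pairok hn t a]]).
move: Hall; rewrite all_rcons => /andP[Ha Ht].
apply: allpairs_f_dep.
- apply: IH => // x y Hxy Hy.
  have := Hc x y Hxy; rewrite size_rcons !nth_rcons Hy (ltn_trans Hxy Hy).
  by move=> H; apply: H; apply: ltnW.
- rewrite mem_filter mem_iota add0n Ha andbT /pairok sallE andbT.
  apply/allP => j; rewrite mem_iota add0n => /andP[_ Hj].
  have := Hc j (size t) Hj; rewrite size_rcons ltnSn !nth_rcons Hj ltnn eqxx.
  by move=> H; apply: H.
Qed.

Lemma nocheck_sound k hn l i : nocheck k hn -> size l = k -> all (fun a => a < 5) l ->
  okb0 k hn l -> i < 5 -> okbc k hn l i = false.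
Proof.
rewrite /nocheck sallE => /allP H Hs Hall Hok Hi.
have Hin : l \in gen hn k.
  rewrite -Hs; apply: gen_complete => // x y Hxy Hy.
  move: Hok; rewrite /okb0 sallE => /allP /(_ x); rewrite mem_iota add0n -Hs (ltn_trans Hxy Hy).
  move=> /(_ isT); rewrite sallE => /allP /(_ y); rewrite mem_iota add0n Hy.
  rewrite (ltn_eqF Hxy) /okpair0 /cpair => /(_ isT).
  by case: (imp _ _) => //; case: (imp _ _).
have := H l Hin; rewrite Hok sallE => /allP /(_ i); rewrite mem_iota Hi.
by move=> /(_ isT) /negbTE.
Qed.

Section Emb.
Variables (T : finType) (e : rel T) (part : T -> 'I_5).
Hypothesis Hsym : symmetric e.
Hypothesis Hr : ring_partition e part.
Variable istar : nat.
Hypothesis Hi : istar < 5.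
Hypothesis Hc1 : complete_to e (block part (istar + 4)) (block part (istar + 3)).
Hypothesis Hc2 : complete_to e (block part (istar + 1)) (block part (istar + 2)).
Local Notation P v := (nat_of_ord (part v)).
Variables (n : nat) (h : rel 'I_n.+1) (hn : nat -> nat -> bool).
Hypothesis Hh : forall x y : 'I_n.+1, h x y = hn x y.
Variable f : 'I_n.+1 -> T.
Hypothesis Hinj : injective f.
Hypothesis Hf : forall x y, e (f x) (f y) = h x y.

Let g (j : nat) := f (inord j).
Let l := [seq P (g j) | j <- iota 0 n.+1].

Lemma sz : size l = n.+1.
Proof. by rewrite size_map size_iota. Qed.
Lemma nthl j : j < n.+1 -> nth 0 l j = P (g j).
Proof. by move=> Hj; rewrite (nth_map 0) ?size_iota // nth_iota. Qed.
Lemma hnE x y : x < n.+1 -> y < n.+1 -> hn x y = e (g x) (g y).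
Proof. move=> Hx Hy; by rewrite /g Hf Hh (inordK Hx) (inordK Hy). Qed.
Lemma ginj x y : x < n.+1 -> y < n.+1 -> g x = g y -> x = y.
Proof. by move=> Hx Hy /Hinj /(congr1 (@nat_of_ord _)); rewrite (inordK Hx) (inordK Hy). Qed.
Lemma all5 : all (fun a => a < 5) l.
Proof. by apply/allP => a /mapP[j _ ->]; exact: ltn_ord. Qed.

Lemma ok0 : okb0 n.+1 hn l.
Proof.
rewrite /okb0 sallE; apply/allP => x; rewrite mem_iota add0n => /andP[_ Hx].
rewrite sallE; apply/allP => y; rewrite mem_iota add0n => /andP[_ Hy].
case: eqP => // /eqP Hxy.
have Hgxy : g x != g y.
  by apply/eqP => /(ginj Hx Hy) /eqP; rewrite (negPf Hxy).
rewrite /okpair0 !nthl // !hnE // !impE.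
have -> : (P (g x) == P (g y)) ==> e (g x) (g y).
  apply/implyP => /eqP H. exact (same_adj Hr H Hgxy).
have -> : ~~ near (P (g x)) (P (g y)) ==> ~~ e (g x) (g y).
  by apply/implyP; apply: contra => H; exact (adj_near Hr H).
apply/implyP => /eqP Hp; rewrite !shasE.
case/orP: (compar Hr Hp) => Hsub.
- rewrite (_ : has _ _ = false) //.
  apply/negbTE/hasPn => z; rewrite mem_iota add0n => /andP[_ Hz].
  rewrite !hnE //; apply/negP => /and4P[Hzx Hzy Hzgx Hzgy].
  have : g z \in cnbhd e (g y).
    by apply: (subsetP Hsub); rewrite inE Hsym Hzgx orbT.
  rewrite inE Hsym (negPf Hzgy) orbF => /eqP /(ginj Hz Hy) /eqP.
  by rewrite (negPf Hzy).
- have -> : has (fun z => [&& z != x, z != y, hn z y & ~~ hn z x]) (iota 0 n.+1) = false;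
    last by rewrite if_same.
  apply/negbTE/hasPn => z; rewrite mem_iota add0n => /andP[_ Hz].
  rewrite !hnE //; apply/negP => /and4P[Hzx Hzy Hzgy Hzgx].
  have : g z \in cnbhd e (g x).
    by apply: (subsetP Hsub); rewrite inE Hsym Hzgy orbT.
  rewrite inE Hsym (negPf Hzgx) orbF => /eqP /(ginj Hz Hx) /eqP.
  by rewrite (negPf Hzx).
Qed.

Lemma okc : okbc n.+1 hn l istar.
Proof.
rewrite /okbc sallE; apply/allP => x; rewrite mem_iota add0n => /andP[_ Hx].
rewrite sallE; apply/allP => y; rewrite mem_iota add0n => /andP[_ Hy].
case: eqP => // /eqP Hxy.
rewrite /okpairc !nthl // !hnE // !impE.
have -> : (if P (g x) == (istar + 4) %% 5 then P (g y) == (istar + 3) %% 5 else false)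
   ==> e (g x) (g y).
  by apply/implyP; case: ifP => // H1 H2; apply: Hc1; rewrite inE.
apply/implyP; case: ifP => // H1 H2; apply: Hc2; rewrite inE //.
Qed.

Lemma no_emb : nocheck n.+1 hn -> False.
Proof.
move=> Hn; have := nocheck_sound Hn sz all5 ok0 Hi.
by rewrite okc.
Qed.
End Emb.

Lemma chkC4 : nocheck 4 (hC 4). Proof. by vm_compute. Qed.
Lemma chkC6 : nocheck 6 (hC 6). Proof. by vm_compute. Qed.
Lemma chkC7 : nocheck 7 (hC 7). Proof. by vm_compute. Qed.
Lemma chk2 : nocheck 6 (hE [:: (0,1); (1,2); (3,4); (4,5)]). Proof. by vm_compute. Qed.
Lemma chkP : nocheck 7 (hE [:: (0,1); (0,2); (0,3); (4,5); (4,6); (5,6); (1,4); (2,5); (3,6)]).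
Proof. by vm_compute. Qed.

Lemma near_refl a : near a a.
Proof. by rewrite /near eqxx orbT. Qed.

Lemma far_path a b : a < 5 -> b < 5 ->
  ~~ near a b \/ exists j, j < 5 /\ ~~ near a j /\ ~~ near j b.
Proof.
case: a => [|[|[|[|[|a]]]]]; case: b => [|[|[|[|[|b]]]]] //= _ _;
  try (by left);
  right; first [ by exists 0 | by exists 1 | by exists 2 | by exists 3 | by exists 4 ].
Qed.

Lemma nn2 a : a < 5 -> ~~ near a ((a + 2) %% 5).
Proof. by case: a => [|[|[|[|[|a]]]]]. Qed.

Lemma simp_facts a : a < 5 ->
  [/\ (a == (((a + 4) %% 5) + 1) %% 5), (a == (((a + 1) %% 5) + 4) %% 5),
      (a + 4) %% 5 != (a + 1) %% 5 & ~~ near ((a + 4) %% 5) ((a + 1) %% 5)].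
Proof. by case: a => [|[|[|[|[|a]]]]]. Qed.

Theorem proposition6p7 (T : finType) (e : rel T) :
  symmetric e -> irreflexive e -> five_crown e ->
  (induced_free e twoP3 /\
   induced_free e (cycle_graph 4) /\
   induced_free e (cycle_graph 6) /\
   induced_free e (cycle_graph 7) /\
   induced_free e three_pentagon) /\
  anticonnected e /\
  (forall v : T, ~ universal e v) /\
  (forall v : T, ~ simplicial e v).
Proof.
move=> Hsym Hirr [part [Hr [i [Hi [Hc1 Hc2]]]]].
have crel : forall x y, ~~ near (part x) (part y) -> complement_rel e x y.
  move=> x y Hn; rewrite /complement_rel; apply/andP; split.
    by apply/eqP => E; move: Hn; rewrite E near_refl.
  by apply: contra Hn => H; exact (adj_near Hr H).
split; [split; [|split; [|split; [|split]]]|split; [|split]].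
- by move=> [f [Hinj Hf]]; exact: (no_emb Hsym Hr Hi Hc1 Hc2 (fun _ _ => erefl) Hinj Hf chk2).
- by move=> [f [Hinj Hf]]; exact: (no_emb Hsym Hr Hi Hc1 Hc2 (fun _ _ => erefl) Hinj Hf chkC4).
- by move=> [f [Hinj Hf]]; exact: (no_emb Hsym Hr Hi Hc1 Hc2 (fun _ _ => erefl) Hinj Hf chkC6).
- by move=> [f [Hinj Hf]]; exact: (no_emb Hsym Hr Hi Hc1 Hc2 (fun _ _ => erefl) Hinj Hf chkC7).
- by move=> [f [Hinj Hf]]; exact: (no_emb Hsym Hr Hi Hc1 Hc2 (fun _ _ => erefl) Hinj Hf chkP).
- move=> x y.
  case: (far_path (ltn_ord (part x)) (ltn_ord (part y))) => [Hn|[j [Hj [H1 H2]]]].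
    by apply: connect1; apply: crel.
  have [z [Pz _]] := head_ex Hr Hj.
  apply: (@connect_trans _ _ z); apply: connect1; apply: crel; rewrite Pz //.
- move=> v Hu.
  have Ha := ltn_ord (part v).
  have [z [Pz _]] := head_ex Hr (ltn_pmod (part v + 2) (isT : 0 < 5)).
  have Hnz := nn2 Ha; rewrite -Pz in Hnz.
  have Hzv : z != v by apply/eqP => E; move: Hnz; rewrite E near_refl.
  by move: Hnz; rewrite (adj_near Hr (Hu z Hzv)).
- move=> v Hs.
  have Ha := ltn_ord (part v).
  have [F1 F2 F3 F4] := simp_facts Ha.
  have [u1 [P1 H1]] := head_ex Hr (ltn_pmod (part v + 4) (isT : 0 < 5)).
  have [u2 [P2 H2]] := head_ex Hr (ltn_pmod (part v + 1) (isT : 0 < 5)).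
  have E1 : e v u1 by rewrite Hsym; apply: H1; rewrite F1 orbT.
  have E2 : e v u2 by rewrite Hsym; apply: H2; rewrite F2.
  have N12 : u1 != u2 by apply/eqP => E; move: F3; rewrite -P1 -P2 E eqxx.
  have := adj_near Hr (Hs _ _ N12 E1 E2).
  by rewrite P1 P2 (negPf F4).
Qed.
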